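(* Let $\mathbb{K}$ be an algebraically closed field of characteristic zero and $Y$ an irreducible affine variety. If the ideal $I\subseteq\mathbb{K}[Y]$ generated by the images $\partial(\mathbb{K}[Y])$ of all locally nilpotent derivations $\partial$ of $\mathbb{K}[Y]$ equals $\mathbb{K}[Y]$, then $Y$ is of type A, i.e. $\mathrm{HD}^*(Y\times\mathbb{A}^1)=\mathbb{K}[Y\times\mathbb{A}^1]$.
   Context: A derivation is locally nilpotent (LND) if every element is killed by some power of it. A slice of an LND $\partial$ is an element $s$ with $\partial(s)=1$. For an affine variety $X$, $\mathrm{HD}^*(X)$ is the $\mathbb{K}$-subalgebra of $\mathbb{K}[X]$ generated by the kernels of all LNDs of $\mathbb{K}[X]$ that have a slice. *)

(* Defs.v *)
From HB Require Import structures.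
From mathcomp Require Import all_boot all_order all_algebra.
Set Implicit Arguments. Unset Strict Implicit. Unset Printing Implicit Defensive.
Import GRing.Theory.
Local Open Scope ring_scope.

(* Algebras over a field K are represented as commutative rings R together
   with a structure ring morphism phi : K -> R. *)

Inductive subalg_gen (K : fieldType) (R : comNzRingType) (phi : K -> R)
    (S : R -> Prop) : R -> Prop :=
  | sg_scalar k : subalg_gen phi S (phi k)
  | sg_gen x : S x -> subalg_gen phi S x
  | sg_add x y : subalg_gen phi S x -> subalg_gen phi S y -> subalg_gen phi S (x + y)
  | sg_mul x y : subalg_gen phi S x -> subalg_gen phi S y -> subalg_gen phi S (x * y).

Inductive ideal_gen (R : comNzRingType) (S : R -> Prop) : R -> Prop :=
  | ig_zero : ideal_gen S 0
  | ig_gen x : S x -> ideal_gen S x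
  | ig_add x y : ideal_gen S x -> ideal_gen S y -> ideal_gen S (x + y)
  | ig_mul r x : ideal_gen S x -> ideal_gen S (r * x).

Definition fin_gen_alg (K : fieldType) (R : comNzRingType) (phi : K -> R) : Prop :=
  exists s : seq R, forall x : R, subalg_gen phi (fun y => y \in s) x.

Definition is_Kder (K : fieldType) (R : comNzRingType) (phi : K -> R)
    (D : R -> R) : Prop :=
  [/\ forall x y, D (x + y) = D x + D y,
      forall x y, D (x * y) = x * D y + y * D x
    & forall k x, D (phi k * x) = phi k * D x].

Definition is_LND (K : fieldType) (R : comNzRingType) (phi : K -> R)
    (D : R -> R) : Prop :=
  is_Kder phi D /\ forall x, exists n : nat, iter n D x = 0.

Definition is_slice (R : comNzRingType) (D : R -> R) (s : R) : Prop := D s = 1.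

Definition HDstar (K : fieldType) (R : comNzRingType) (phi : K -> R) : R -> Prop :=
  subalg_gen phi (fun x => exists D, [/\ is_LND phi D, exists s, is_slice D s & D x = 0]).

Definition LND_image_ideal (K : fieldType) (R : comNzRingType) (phi : K -> R) : R -> Prop :=
  ideal_gen (fun y => exists D x, is_LND phi D /\ y = D x).

(* Main.v *)
Require Import Defs.
From mathcomp Require Import all_boot all_order all_algebra.
From mathcomp Require Import ring.
Set Implicit Arguments. Unset Strict Implicit.
Import GRing.Theory.
Local Open Scope ring_scope.



Lemma interp (K : fieldType) (hchar : [pchar K] =i pred0) (R : comNzRingType)
  (f : {rmorphism K -> R}) (S : R -> Prop) (S0 : S 0)
  (SD : forall x y, S x -> S y -> S (x + y))
  (SZ : forall k x, S x -> S (f k * x)) (n : nat) (C : 'I_n -> R)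
  (hv : forall l, S (\sum_(k < n) f l ^+ k * C k)) (i : 'I_n) : S (C i).
Proof.
pose a : 'rV[K]_n := \row_(j < n) (j%:R : K).
pose V := Vandermonde n a.
have hV : V \in unitmx.
  rewrite unitmxE unitfE det_Vandermonde; apply/prodf_neq0 => i0 _.
  apply/prodf_neq0 => j hij; rewrite !mxE -natrB ?(ltnW hij) //.
  rewrite ((pcharf0P K).1 hchar) subn_eq0 -ltnNge //.
have e : C i = \sum_(j < n) f (invmx V j i) * (\sum_(k < n) f (j%:R) ^+ k * C k).
  transitivity (\sum_(k < n) f ((V *m invmx V) k i) * C k).
    rewrite mulmxV // (bigD1 i) //= big1 ?addr0; first by rewrite mxE eqxx rmorph1 mul1r.
    by move=> k hk; rewrite mxE (negbTE hk) rmorph0 mul0r.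
  under eq_bigr => k _ do rewrite mxE rmorph_sum big_distrl.
  rewrite exchange_big /=; apply: eq_bigr => j _; rewrite big_distrr.
  apply: eq_bigr => k _; rewrite /V /Vandermonde !mxE rmorphM rmorphXn.
  by rewrite -mulrA; exact: mulrCA.
rewrite e; apply: (big_ind S) => //.
by move=> j _; apply: SZ.
Qed.



Lemma der0 (K : fieldType) (A : comNzRingType) (phi : K -> A) (d : A -> A) :
  is_Kder phi d -> d 0 = 0.
Proof.
case=> hD _ _; apply: (@addrI _ (d 0)); by rewrite -hD !addr0.
Qed.

Lemma iter0 (A : comNzRingType) (d : A -> A) (h : d 0 = 0) n : iter n d 0 = 0.
Proof. by elim: n => //= n ->. Qed.

Lemma iterDa (K : fieldType) (A : comNzRingType) (phi : K -> A) (d : A -> A) :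
  is_Kder phi d -> forall n x y, iter n d (x + y) = iter n d x + iter n d y.
Proof. move=> hd; have [hD _ _] := hd; by elim=> //= n IH x y; rewrite IH hD. Qed.

Lemma derMn (K : fieldType) (A : comNzRingType) (phi : K -> A) (d : A -> A) :
  is_Kder phi d -> forall x m, d (x *+ m) = d x *+ m.
Proof.
move=> hd x; elim=> [|m IH]; first by rewrite !mulr0n (der0 hd).
by rewrite !mulrS; have [hD _ _] := hd; rewrite hD IH.
Qed.

Lemma iterMn (K : fieldType) (A : comNzRingType) (phi : K -> A) (d : A -> A) :
  is_Kder phi d -> forall n x m, iter n d (x *+ m) = iter n d x *+ m.
Proof. by move=> hd; elim=> //= n IH x m; rewrite IH (derMn hd). Qed.

Lemma iter_ge (A : comNzRingType) (d : A -> A) (h : d 0 = 0) n k x :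
  iter n d x = 0 -> (n <= k)%N -> iter k d x = 0.
Proof. by move=> hx hk; rewrite -(subnK hk) iterD hx iter0. Qed.

Definition Dext (A : comNzRingType) (d : A -> A) (p : {poly A}) : {poly A} :=
  map_poly d p + p^`().

Lemma coef_Dext (A : comNzRingType) (d : A -> A) (h : d 0 = 0) p i :
  (Dext d p)`_i = d p`_i + p`_i.+1 *+ i.+1.
Proof. by rewrite /Dext coefD coef_map_id0 // coef_deriv. Qed.

Lemma map_Leib (K : fieldType) (A : comNzRingType) (phi : K -> A) (d : A -> A) :
  is_Kder phi d -> forall p q : {poly A},
  map_poly d (p * q) = p * map_poly d q + q * map_poly d p.
Proof.
move=> hd p q; have [hD hM _] := hd; have h0 := der0 hd.
apply/polyP => i; rewrite coefD coef_map_id0 // (coefM p q) (coefM p) (coefMr q).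
rewrite (big_morph d hD h0) -big_split; apply: eq_bigr => j _.
by rewrite hM !coef_map_id0.
Qed.

Lemma Dext_Kder (K : fieldType) (A : comNzRingType) (phi : {rmorphism K -> A}) (d : A -> A) :
  is_Kder phi d -> is_Kder (fun k : K => (phi k)%:P) (Dext d).
Proof.
move=> hd; have [hD hM hK] := hd; have h0 := der0 hd; split.
- move=> x y; apply/polyP => i; rewrite (coef_Dext h0 (x + y)) (coefD (Dext d x)) (coef_Dext h0 x) (coef_Dext h0 y).
  by rewrite !coefD hD mulrnDl addrACA.
- move=> x y; rewrite /Dext derivM (map_Leib hd) !mulrDr (mulrC y (x^`())).
  by rewrite [in RHS]addrACA; congr (_ + _); rewrite addrC.
- move=> k x; apply/polyP => i; rewrite (coef_Dext h0 (_ * x)) !coefCM (coef_Dext h0 x).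
  by rewrite hK mulrDr mulrnAr.
Qed.
Lemma Dext_nil (K : fieldType) (A : comNzRingType) (phi : K -> A) (d : A -> A) :
  is_LND phi d -> forall p, exists n, iter n (Dext d) p = 0.
Proof.
move=> [hd hn] p; have h0 := der0 hd.
pose Bnd N (q : {poly A}) := forall i, iter (N - i) d q`_i = 0.
have step N q : Bnd N.+1 q -> Bnd N (Dext d q).
  move=> hB i; rewrite coef_Dext // (iterDa hd) (iterMn hd).
  case: (ltnP N i) => hi.
    have e1 : (N - i = 0)%N by apply/eqP; rewrite subn_eq0 ltnW.
    have e2 : (N.+1 - i = 0)%N by apply/eqP; rewrite subn_eq0.
    have := hB i; have := hB i.+1; rewrite e2 subSS e1 /= => -> ->.
    by rewrite h0 mul0rn addr0.
  have := hB i; have := hB i.+1; rewrite subSS subSn // iterSr => -> ->.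
  by rewrite mul0rn addr0.
have nil N q : Bnd N q -> iter N (Dext d) q = 0.
  elim: N q => [|N IH] q hB.
    by apply/polyP => i; rewrite coef0 /=; have := hB i.
  by rewrite iterSr; apply: IH; apply: step.
have ex m : exists M, forall i k, (i < m)%N -> (M <= k)%N -> iter k d p`_i = 0.
  elim: m => [|m [M IH]]; first by exists 0%N.
  have [n hn'] := hn p`_m.
  exists (maxn M n) => i k hi hk.
  case: (ltnP i m) => him.
    exact: (IH i k him (leq_trans (leq_maxl M n) hk)).
  have e : i = m by apply/eqP; rewrite eqn_leq -ltnS hi him.
  rewrite e; exact: (iter_ge h0 hn' (leq_trans (leq_maxr M n) hk)).
have [M hM] := ex (size p).
exists (M + size p)%N; apply: nil => i.
case: (ltnP i (size p)) => hi.
  have hk : (M <= M + size p - i)%N by rewrite -addnBA; [exact: leq_addr | exact: ltnW].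
  exact: (hM i _ hi hk).
by rewrite nth_default // iter0.
Qed.

Lemma Dext_X (K : fieldType) (A : comNzRingType) (phi : K -> A) (d : A -> A) :
  is_Kder phi d -> Dext d 'X = 1.
Proof.
move=> hd; have [_ hM _] := hd; have h0 := der0 hd.
have h1 : d 1 = 0.
  have := hM 1 1; rewrite mulr1 mul1r => e.
  by apply: (@addrI _ (d 1)); rewrite addr0 -e.
apply/polyP => i; rewrite (coef_Dext h0 'X) !coefX coef1.
case: i => [|[|i]] /=.
- by rewrite mulr0n h0 add0r.
- by rewrite mulr1n h1 mul0rn addr0.
- by rewrite !mulr0n h0 mul0rn addr0.
Qed.

Definition cf (K : fieldType) (k : nat) : K := (-1) ^+ k / k`!%:R.

Definition Epoly (K : fieldType) (A : comNzRingType) (phi : K -> A) (d : A -> A)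
  (a : A) (N : nat) : {poly A} := \poly_(k < N) (phi (cf K k) * iter k d a).

Lemma cf_rec (K : fieldType) (hchar : [pchar K] =i pred0) i :
  cf K i.+1 *+ i.+1 = - cf K i.
Proof.
have hn m : (m.+1%:R : K) != 0 by rewrite ((pcharf0P K).1 hchar).
have hf : (i`!%:R : K) != 0.
  by rewrite ((pcharf0P K).1 hchar) -lt0n fact_gt0.
rewrite /cf factS natrM invfM exprS -mulr_natr.
field. by rewrite hf addrC natr1 hn.
Qed.

Lemma E_ker (K : fieldType) (hchar : [pchar K] =i pred0) (A : comNzRingType)
  (phi : {rmorphism K -> A}) (d : A -> A) :
  is_Kder phi d -> forall a N, iter N d a = 0 -> Dext d (Epoly phi d a N) = 0.
Proof.
move=> hd a N hN; have [hD hM hK] := hd; have h0 := der0 hd.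
apply/polyP => i; rewrite coef_Dext // !coef_poly coef0.
case: (ltnP i.+1 N) => h.
  rewrite (ltnW h) hK -iterS -mulrnAl -rmorphMn (cf_rec hchar) rmorphN.
  by rewrite mulNr addrN.
rewrite mul0rn addr0; case: ifP => hi; last by rewrite h0.
have e : i.+1 = N by apply/eqP; rewrite eqn_leq hi h.
by rewrite hK -iterS e hN mulr0.
Qed.

Definition dsc (A : comNzRingType) (c : A) (d : A -> A) (x : A) := c * d x.

Lemma dsc_Kder (K : fieldType) (A : comNzRingType) (phi : {rmorphism K -> A})
  (d : A -> A) l : is_Kder phi d -> is_Kder phi (dsc (phi l) d).
Proof.
move=> [hD hM hK]; split.
- by move=> x y; rewrite /dsc hD mulrDr.
- by move=> x y; rewrite /dsc hM mulrDr mulrCA (mulrCA (phi l) y).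
- by move=> k x; rewrite /dsc hK mulrCA.
Qed.

Lemma iter_dsc (K : fieldType) (A : comNzRingType) (phi : {rmorphism K -> A})
  (d : A -> A) l : is_Kder phi d -> forall n x,
  iter n (dsc (phi l) d) x = phi l ^+ n * iter n d x.
Proof.
move=> [hD hM hK]; elim=> [|n IH] x /=; first by rewrite expr0 mul1r.
by rewrite IH /dsc -rmorphXn hK rmorphXn exprS mulrA.
Qed.

Lemma dsc_LND (K : fieldType) (A : comNzRingType) (phi : {rmorphism K -> A})
  (d : A -> A) l : is_LND phi d -> is_LND phi (dsc (phi l) d).
Proof.
move=> [hd hn]; split; first exact: dsc_Kder.
by move=> x; have [n hx] := hn x; exists n; rewrite (iter_dsc _ hd) hx mulr0.
Qed.

Lemma HD0 (K : fieldType) (A : comNzRingType) (phi : {rmorphism K -> A}) :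
  HDstar (fun k : K => (phi k)%:P) 0.
Proof. rewrite -polyC0 -(rmorph0 phi); exact: sg_scalar. Qed.

Lemma HD_scal (K : fieldType) (A : comNzRingType) (phi : {rmorphism K -> A}) k x :
  HDstar (fun k : K => (phi k)%:P) x -> HDstar (fun k : K => (phi k)%:P) ((phi k)%:P * x).
Proof. move=> h; apply: sg_mul h; exact: sg_scalar. Qed.

Lemma key (K : fieldType) (hchar : [pchar K] =i pred0) (A : comNzRingType)
  (phi : {rmorphism K -> A}) (d : A -> A) (hd : is_LND phi d) (a : A) (N : nat)
  (hN : iter N d a = 0) (i : 'I_N) :
  HDstar (fun k : K => (phi k)%:P) ((phi (cf K i) * iter i d a)%:P * 'X^i).
Proof.
have [hK hn] := hd.
pose C := fun k : 'I_N => (phi (cf K k) * iter k d a)%:P * 'X^k.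
change (HDstar (fun k : K => (phi k)%:P) (C i)).
apply: (@interp K hchar _ (polyC \o phi) _ (HD0 phi)
  (fun x y hx hy => sg_add hx hy) (fun k x hx => HD_scal k hx) N C) => l.
have -> : \sum_(k < N) (polyC \o phi) l ^+ k * C k = Epoly phi (dsc (phi l) d) a N.
  rewrite /Epoly poly_def; apply: eq_bigr => k _.
  rewrite (iter_dsc _ hK) /C /= -mul_polyC !polyCM (rmorphXn polyC).
  by rewrite mulrA mulrCA.
apply: sg_gen; exists (Dext (dsc (phi l) d)); split.
- split; first exact: Dext_Kder (dsc_Kder _ hK).
  exact: Dext_nil (dsc_LND _ hd).
- exists 'X; exact: Dext_X (dsc_Kder _ hK).
- apply: (E_ker hchar (dsc_Kder _ hK)).
  by rewrite (iter_dsc _ hK) hN mulr0.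
Qed.

Theorem proposition1 (K : closedFieldType) (hchar : [pchar K] =i pred0)
    (A : idomainType) (phi : {rmorphism K -> A})
    (hfg : fin_gen_alg phi) :
  (forall a : A, LND_image_ideal phi a) ->
  forall p : {poly A}, HDstar (fun k : K => (phi k)%:P) p.
Proof.
move=> hI.
have z : is_LND phi (fun _ : A => 0).
  split; last by move=> x; exists 1%N.
  split; [by move=> *; rewrite addr0 | by move=> *; rewrite !mulr0 addr0 | by move=> *; rewrite mulr0].
have HA a : HDstar (fun k : K => (phi k)%:P) a%:P.
  have := @key K hchar A phi _ z a 1%N erefl ord0.
  by rewrite /cf /= !expr0 fact0 mulr1n invr1 !mulr1 rmorph1 mul1r.
have HXd D : is_LND phi D -> forall x, HDstar (fun k : K => (phi k)%:P) ((D x)%:P * 'X).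
  move=> hd x; have [n hn] := hd.2 x.
  have hN : iter n.+2 D x = 0.
    exact: (iter_ge (der0 hd.1) hn (leq_trans (leqnSn n) (leqnSn n.+1))).
  have := HD_scal (-1) (@key K hchar A phi _ hd x n.+2 hN (@Ordinal n.+2 1 isT)).
  rewrite /cf /= expr1 (_ : 1`! = 1%N) // mulr1n invr1 mulr1 rmorphN1 mulN1r.
  by rewrite !polyCN polyC1 mulN1r mulNr opprK expr1.
have HXi : forall y, LND_image_ideal phi y -> HDstar (fun k : K => (phi k)%:P) (y%:P * 'X).
  move=> y; rewrite /LND_image_ideal.
  elim => [|z0 [D [x [hD ->]]]|u v _ hu _ hv|r u _ hu].
  - rewrite polyC0 mul0r; exact: HD0.
  - exact: HXd.
  - rewrite polyCD mulrDl; exact: sg_add.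
  - rewrite polyCM -mulrA; exact: sg_mul (HA r) hu.
have HX := HXi 1 (hI 1); rewrite polyC1 mul1r in HX.
move=> p; elim/poly_ind: p => [|p c IH]; first exact: HD0.
exact: sg_add (sg_mul IH HX) (HA c).
Qed.
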